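(* Let $0<i_1<i_2<\cdots<i_L$ be integers, $\mathcal S=\{x_0,x_{i_1},\ldots,x_{i_L}\}$, and let $d_{RRA}^{\mathcal S}$ be the corresponding restricted right-arm rotation distance. Let $T_1,T_2$ be finite rooted binary trees each with $n$ nodes, $n\ge3$, such that $d_{RRA}^{\mathcal S}(T_1,T_2)$ is defined. Then $d_{RRA}^{\mathcal S}(T_1,T_2)\le 4n-8$.
   Context: Trees: finite rooted binary trees, each internal vertex (node) having a left and a right child. The right arm consists of the root and all nodes reachable from the root by a path of right edges; the level of a node is its distance (number of edges) from the root. Right rotation at a node $N$ whose left child $M$ is a node (with $A,B$ the left and right subtrees of $M$, $C$ the right subtree of $N$) replaces the subtree at $N$ by one whose root has left subtree $A$ and whose right child is a node with left subtree $B$ and right subtree $C$; left rotation at $N$ is the inverse operation. Rotations do not change the number of nodes. For $\mathcal S=\{x_0,x_{i_1},\ldots,x_{i_L}\}$, $d_{RRA}^{\mathcal S}(T_1,T_2)$ is the minimal number of rotations, each performed at a node on the right arm at one of the levels $0,i_1,\ldots,i_L$, required to transform $T_1$ into $T_2$; it is defined when such a sequence of rotations exists. *)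

(* Defs.v *)
From Stdlib Require Import Arith List Sorted.
Import ListNotations.

Inductive tree : Type :=
| Leaf : tree
| Node : tree -> tree -> tree.

(* number of nodes (internal vertices) *)
Fixpoint nodes (t : tree) : nat :=
  match t with
  | Leaf => 0
  | Node l r => S (nodes l + nodes r)
  end.

Definition right_rot_root (t t' : tree) : Prop :=
  exists A B C, t = Node (Node A B) C /\ t' = Node A (Node B C).

Definition left_rot_root (t t' : tree) : Prop :=
  exists A B C, t = Node A (Node B C) /\ t' = Node (Node A B) C.

Definition rot_root (t t' : tree) : Prop := right_rot_root t t' \/ left_rot_root t t'.

Fixpoint rot_arm (k : nat) (t t' : tree) : Prop :=
  match k with
  | 0 => rot_root t t'
  | S k' =>
      match t, t' with
      | Node l r, Node l' r' => l = l' /\ rot_arm k' r r'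
      | _, _ => False
      end
  end.

Definition allowed (is : list nat) (k : nat) : Prop := k = 0 \/ In k is.

Definition rra_step (is : list nat) (t t' : tree) : Prop :=
  exists k, allowed is k /\ rot_arm k t t'.

Inductive rra_path (is : list nat) : nat -> tree -> tree -> Prop :=
| rra_refl t : rra_path is 0 t t
| rra_cons m t u v : rra_step is t u -> rra_path is m u v -> rra_path is (S m) t v.

Definition rra_defined (is : list nat) (t t' : tree) : Prop :=
  exists m, rra_path is m t t'.

Definition rra_dist_le (is : list nat) (t t' : tree) (d : nat) : Prop :=
  exists m, m <= d /\ rra_path is m t t'.

(* Main.v *)
Require Import Defs.
From Stdlib Require Import Arith List Sorted Lia.
Import ListNotations.

Fixpoint build (l : list tree) : tree :=
  match l with [] => Leaf | a :: l' => Node a (build l') end.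
Fixpoint items (t : tree) : list tree :=
  match t with Leaf => [] | Node a b => a :: items b end.
Fixpoint spine (t : tree) : list tree :=
  match t with Leaf => [] | Node a b => spine a ++ [b] end.
Definition comb (e0 : tree) (l : list tree) : tree := fold_left Node l e0.
Definition mk (e0 : tree) (rest : list tree) (j : nat) : tree :=
  build (comb e0 (firstn j rest) :: skipn j rest).
Definition w (l : list tree) : nat := nodes (build l).
Fixpoint inner (l : list tree) : nat :=
  match l with [] => 0 | a :: l' => nodes a + inner l' end.
Definition leaves (k : nat) : list tree := repeat Leaf k.

Lemma w_nil : w [] = 0. Proof. reflexivity. Qed.
Lemma w_cons a l : w (a :: l) = S (nodes a + w l). Proof. reflexivity. Qed.
Lemma w_app l1 l2 : w (l1 ++ l2) = w l1 + w l2.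
Proof. induction l1; simpl app; [reflexivity|]. rewrite !w_cons, IHl1. lia. Qed.
Lemma w_len l : w l = length l + inner l.
Proof. induction l; [reflexivity|]. rewrite w_cons, IHl. simpl. lia. Qed.
Lemma build_items t : build (items t) = t.
Proof. induction t; simpl; congruence. Qed.
Lemma w_items t : w (items t) = nodes t.
Proof. unfold w; rewrite build_items; reflexivity. Qed.
Lemma w_spine t : w (spine t) = nodes t.
Proof. induction t; [reflexivity|]. simpl spine. rewrite w_app, w_cons, w_nil, IHt1. simpl. lia. Qed.
Lemma comb_spine t : comb Leaf (spine t) = t.
Proof. induction t; [reflexivity|]. unfold comb in *. simpl spine. rewrite fold_left_app, IHt1. reflexivity. Qed.

Lemma nodes0 t : nodes t = 0 -> t = Leaf.
Proof. destruct t; simpl; congruence. Qed.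
Lemma w0 l : w l = 0 -> l = [].
Proof. destruct l; [auto|]. rewrite w_cons. lia. Qed.
Lemma w_small l : w l < 2 -> l = leaves (w l).
Proof.
  destruct l as [|t l]; [reflexivity|]. rewrite w_cons. intro H.
  assert (nodes t = 0) by lia. assert (w l = 0) by lia.
  rewrite H0, H1. apply nodes0 in H0. apply w0 in H1. subst. reflexivity.
Qed.

Lemma path_app is m1 m2 a b c : rra_path is m1 a b -> rra_path is m2 b c -> rra_path is (m1 + m2) a c.
Proof. induction 1; intros; simpl; auto. econstructor; eauto. Qed.

Lemma rot_root_sym t t' : rot_root t t' -> rot_root t' t.
Proof. intros [(A&B&C&->&->)|(A&B&C&->&->)]; [right|left]; exists A, B, C; auto. Qed.
Lemma rot_arm_sym k : forall t t', rot_arm k t t' -> rot_arm k t' t.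
Proof.
  induction k; simpl; intros t t' H. apply rot_root_sym; auto.
  destruct t, t'; try contradiction. destruct H; split; auto.
Qed.
Lemma step_sym is t t' : rra_step is t t' -> rra_step is t' t.
Proof. intros (k&Hk&H); exists k; split; auto; apply rot_arm_sym; auto. Qed.
Lemma path_rev is m a b : rra_path is m a b -> rra_path is m b a.
Proof.
  induction 1. constructor.
  replace (S m) with (m + 1) by lia. eapply path_app; eauto.
  econstructor. apply step_sym; eauto. constructor.
Qed.

Lemma dl_refl is a : rra_dist_le is a a 0.
Proof. exists 0; split; auto; constructor. Qed.
Lemma dl_trans is d1 d2 a b c : rra_dist_le is a b d1 -> rra_dist_le is b c d2 -> rra_dist_le is a c (d1 + d2).
Proof. intros (m1&?&?) (m2&?&?). exists (m1+m2); split; [lia|]. eapply path_app; eauto. Qed.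
Lemma dl_step is a b : rra_step is a b -> rra_dist_le is a b 1.
Proof. intros. exists 1; split; auto. econstructor; eauto. constructor. Qed.
Lemma dl_mono is d d' a b : d <= d' -> rra_dist_le is a b d -> rra_dist_le is a b d'.
Proof. intros ? (m&?&?); exists m; split; auto; lia. Qed.
Lemma dl_rev is d a b : rra_dist_le is a b d -> rra_dist_le is b a d.
Proof. intros (m&?&?); exists m; split; auto; apply path_rev; auto. Qed.
Lemma mk_app e0 L Z j : j <= length L -> mk e0 (L ++ Z) j = build (comb e0 (firstn j L) :: skipn j L ++ Z).
Proof.
  intro H. unfold mk. rewrite firstn_app, skipn_app.
  replace (j - length L) with 0 by lia. simpl. rewrite app_nil_r. reflexivity.
Qed.

Lemma decomp (l : list tree) j : j < length l -> exists L b Z, l = L ++ b :: Z /\ length L = j.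
Proof.
  revert j; induction l as [|x l IH]; simpl; intros j H; [lia|].
  destruct j. exists [], x, l; auto.
  destruct (IH j) as (L&b&Z&->&<-); [lia|]. exists (x :: L), b, Z; auto.
Qed.

Lemma cursor_root e0 rest j : j < length rest -> rot_root (mk e0 rest (S j)) (mk e0 rest j).
Proof.
  intro H. destruct (decomp rest j H) as (L&b&Z&->&<-).
  replace (L ++ b :: Z) with ((L ++ [b]) ++ Z) by (rewrite <- app_assoc; reflexivity).
  rewrite !mk_app by (rewrite length_app; simpl; lia).
  rewrite firstn_all2 by (rewrite length_app; simpl; lia).
  rewrite skipn_all2 by (rewrite length_app; simpl; lia).
  rewrite firstn_app, skipn_app, Nat.sub_diag, firstn_all, skipn_all. simpl.
  unfold comb. rewrite fold_left_app. simpl.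
  left. exists (fold_left Node L e0), b, (build Z). rewrite app_nil_r. auto.
Qed.

Lemma step0 is t t' : rot_root t t' -> rra_step is t t'.
Proof. intro H. exists 0. split; [left; auto| exact H]. Qed.

Lemma cursor_to0 is e0 rest j : j <= length rest -> rra_dist_le is (mk e0 rest j) (mk e0 rest 0) j.
Proof.
  induction j; intro H. apply dl_refl.
  replace (S j) with (1 + j) by lia. eapply dl_trans; [|apply IHj; lia].
  apply dl_step, step0, cursor_root; lia.
Qed.

Lemma rot_arm_app Q Z Z' : rot_root (build Z) (build Z') -> rot_arm (length Q) (build (Q ++ Z)) (build (Q ++ Z')).
Proof. induction Q; simpl; auto. Qed.

Lemma split_rot e0 P X x y Y j : length X = j ->
  rot_arm (S (length P)) (mk e0 (P ++ X ++ Node x y :: Y) j) (mk e0 (P ++ X ++ x :: y :: Y) j).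
Proof.
  intro HX. rewrite !app_assoc. rewrite !mk_app by (rewrite length_app; lia).
  set (Q := skipn j (P ++ X)).
  assert (HQ : length Q = length P) by (unfold Q; rewrite length_skipn, length_app; lia).
  rewrite <- HQ.
  change (rot_arm (length (comb e0 (firstn j (P ++ X)) :: Q))
     (build ((comb e0 (firstn j (P ++ X)) :: Q) ++ Node x y :: Y))
     (build ((comb e0 (firstn j (P ++ X)) :: Q) ++ x :: y :: Y))).
  apply rot_arm_app. left. exists x, y, (build Y). auto.
Qed.

Lemma leaves_snoc a H : leaves a ++ Leaf :: H = leaves (S a) ++ H.
Proof. induction a; simpl; auto. f_equal. auto. Qed.

Lemma w1 l : w l = 1 -> l = [Leaf].
Proof. intro H. assert (w l < 2) by lia. apply w_small in H0. rewrite H in H0. exact H0. Qed.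

Lemma proc is P e0 : In (S (length P)) is ->
  forall M H a, inner H + w H <= M -> 2 <= w H ->
  rra_dist_le is (mk e0 (P ++ leaves a ++ H) a) (mk e0 (P ++ leaves (a + w H)) (a + w H - 2))
    (inner H + w H - 2).
Proof.
  intros Hin M. induction M; intros H a HM H2.
  { destruct H; [rewrite w_nil in H2; lia|]. rewrite w_cons in HM; lia. }
  destruct H as [|t H']; [rewrite w_nil in H2; lia|].
  destruct t as [|x y].
  - destruct (le_lt_dec 2 (w H')) as [Hw|Hw].
    + rewrite w_cons in *. simpl inner in *. simpl nodes in *.
      replace (inner H' + S (0 + w H') - 2) with (1 + (inner H' + w H' - 2)) by lia.
      eapply dl_trans.
      * apply dl_step, step_sym, step0, cursor_root.
        rewrite !length_app. simpl. unfold leaves. rewrite repeat_length. lia.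
      * rewrite leaves_snoc.
        replace (a + S (0 + w H')) with (S a + w H') by lia.
        apply IHM; lia.
    + assert (Hw1 : w H' = 1) by (rewrite w_cons in H2; simpl in H2; lia).
      apply w1 in Hw1. subst H'.
      replace (a + w [Leaf; Leaf] - 2) with a by (cbv [w build nodes]; lia).
      replace (a + w [Leaf; Leaf]) with (a + 2) by (cbv [w build nodes]; lia).
      unfold leaves. rewrite repeat_app. simpl. eapply dl_mono; [|apply dl_refl]. lia.
  - assert (Hs : rra_dist_le is (mk e0 (P ++ leaves a ++ Node x y :: H') a)
                                 (mk e0 (P ++ leaves a ++ x :: y :: H') a) 1).
    { apply dl_step. exists (S (length P)). split; [right; auto|].
      apply split_rot. unfold leaves; apply repeat_length. }
    assert (Hw : w (Node x y :: H') = w (x :: y :: H')) by (rewrite !w_cons; simpl; lia).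
    rewrite Hw in *.
    replace (inner (Node x y :: H') + w (x :: y :: H') - 2) with (1 + (inner (x :: y :: H') + w (x :: y :: H') - 2))
      by (simpl; lia).
    eapply dl_trans; [exact Hs|]. apply IHM; auto. simpl in HM |- *. lia.
Qed.
Definition Elist (t : tree) : list tree :=
  match t with Leaf => [] | Node x y => Leaf :: spine x ++ items y end.
Definition key (p : nat) (t : tree) : list tree * nat :=
  (firstn p (Elist t), w (skipn p (Elist t))).
Definition canonk (k : list tree * nat) : tree :=
  match fst k with [] => Leaf | e0 :: P => mk e0 (P ++ leaves (snd k)) (snd k - 2) end.

Lemma root_Elist t t' : rot_root t t' -> Elist t = Elist t'.
Proof.
  intros [(A&B&C&->&->)|(A&B&C&->&->)]; simpl; rewrite <- app_assoc; reflexivity.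
Qed.

Lemma root_nodes t t' : rot_root t t' -> nodes t = nodes t'.
Proof. intros [(A&B&C&->&->)|(A&B&C&->&->)]; simpl; lia. Qed.

Lemma arm_split k : forall r r', rot_arm k r r' ->
  exists Q Z Z', items r = Q ++ Z /\ items r' = Q ++ Z' /\ length Q = k /\ w Z = w Z'.
Proof.
  induction k; intros r r' H.
  - exists [], (items r), (items r'). repeat split; auto. rewrite !w_items. apply root_nodes; auto.
  - simpl in H. destruct r as [|l r], r' as [|l' r']; try contradiction.
    destruct H as [<- H]. destruct (IHk _ _ H) as (Q&Z&Z'&E1&E2&E3&E4).
    exists (l :: Q), Z, Z'. simpl. rewrite E1, E2. repeat split; auto.
Qed.


Lemma step_key is p t t' : (forall k, allowed is k -> k = 0 \/ p <= k) ->
  rra_step is t t' -> key p t = key p t'.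
Proof.
  intros Hall (k&Hk&H). destruct (Hall k Hk) as [->|Hp].
  - unfold key. rewrite (root_Elist _ _ H). reflexivity.
  - destruct k as [|k]. { simpl in H. unfold key. rewrite (root_Elist _ _ H). reflexivity. }
    simpl in H. destruct t as [|l r], t' as [|l' r']; try contradiction.
    destruct H as [<- H]. destruct (arm_split _ _ _ H) as (Q&Z&Z'&E1&E2&E3&E4).
    unfold key; simpl Elist. rewrite E1, E2.
    replace (Leaf :: spine l ++ Q ++ Z) with ((Leaf :: spine l ++ Q) ++ Z) by (simpl; rewrite app_assoc; auto).
    replace (Leaf :: spine l ++ Q ++ Z') with ((Leaf :: spine l ++ Q) ++ Z') by (simpl; rewrite app_assoc; auto).
    assert (HL : p <= length (Leaf :: spine l ++ Q)) by (simpl; rewrite length_app; lia).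
    rewrite !firstn_app, !skipn_app, !w_app.
    replace (p - length (Leaf :: spine l ++ Q)) with 0 by lia. simpl firstn. simpl skipn.
    rewrite E4. reflexivity.
Qed.

Lemma path_key is p m t t' : (forall k, allowed is k -> k = 0 \/ p <= k) ->
  rra_path is m t t' -> key p t = key p t'.
Proof. intros Hall; induction 1; auto. rewrite (step_key is p t u); auto. Qed.

Lemma reach is p t : In (S p) is -> 3 <= nodes t ->
  rra_dist_le is t (canonk (key (S p) t)) (2 * nodes t - 4).
Proof.
  intros Hin Hn. destruct t as [|x y]; [simpl in Hn; lia|].
  set (rest := spine x ++ items y).
  assert (Ht : Node x y = mk Leaf rest (length (spine x))).
  { unfold rest. rewrite mk_app by lia. rewrite firstn_all, skipn_all. simpl.
    rewrite comb_spine, build_items. reflexivity. }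
  assert (Hn' : nodes (Node x y) = S (w rest)).
  { unfold rest. rewrite w_app, w_spine, w_items. reflexivity. }
  unfold key, canonk. simpl Elist. simpl fst. simpl snd. fold rest.
  set (P := firstn p rest). set (G := skipn p rest).
  assert (HPG : rest = P ++ G) by (symmetry; apply firstn_skipn).
  assert (Hj : length (spine x) <= length rest) by (unfold rest; rewrite length_app; lia).
  assert (Hc := cursor_to0 is Leaf rest _ Hj). rewrite <- Ht in Hc.
  assert (HwPG : w rest = w P + w G) by (rewrite HPG, w_app; auto).
  assert (HlPG : length rest = length P + length G) by (rewrite HPG, length_app; auto).
  assert (HlP : length P <= w P) by (rewrite w_len; lia).
  assert (Hlr : length rest <= w rest) by (rewrite w_len; lia).
  destruct (le_lt_dec 2 (w G)) as [H2|H2].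
  - assert (HP : length P = p).
    { assert (HGn : G <> []) by (intro E; rewrite E, w_nil in H2; lia).
      unfold P. rewrite length_firstn.
      assert (HG0 : length G > 0) by (destruct G; simpl; [congruence|lia]).
      unfold G in HG0. rewrite length_skipn in HG0. lia. }
    assert (Hpr := proc is P Leaf ltac:(rewrite HP; auto) _ G 0 (le_n _) H2).
    simpl in Hpr. rewrite <- HPG in Hpr.
    assert (HwG : w G = length G + inner G) by apply w_len.
    eapply dl_mono; [|eapply dl_trans; [exact Hc | exact Hpr]]. lia.
  - assert (HG := w_small _ H2). rewrite <- HG, <- HPG.
    replace (w G - 2) with 0 by lia.
    eapply dl_mono; [|exact Hc]. lia.
Qed.

Theorem proposition3p8 (is : list nat) (n : nat) (T1 T2 : tree) :
  is <> nil ->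
  Sorted lt is ->
  Forall (fun i => 0 < i) is ->
  3 <= n ->
  nodes T1 = n -> nodes T2 = n ->
  rra_defined is T1 T2 ->
  rra_dist_le is T1 T2 (4 * n - 8).
Proof.
  intros Hne Hs Hpos Hn H1 H2 [m Hm].
  destruct is as [|p l]; [congruence|].
  assert (Hp : 0 < p) by (inversion Hpos; auto).
  apply Sorted_StronglySorted in Hs; [|intros a b c; lia].
  apply StronglySorted_inv in Hs. destruct Hs as [_ Hl].
  assert (Hall : forall k, allowed (p :: l) k -> k = 0 \/ p <= k).
  { intros k [->|[->|Hk]]; auto. right. rewrite Forall_forall in Hl. specialize (Hl k Hk). lia. }
  destruct p as [|p]; [lia|].
  assert (Hk := path_key _ (S p) _ _ _ Hall Hm).
  assert (R1 := reach (S p :: l) p T1 (or_introl eq_refl) ltac:(lia)).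
  assert (R2 := reach (S p :: l) p T2 (or_introl eq_refl) ltac:(lia)).
  rewrite Hk in R1. apply dl_rev in R2.
  eapply dl_mono; [|eapply dl_trans; [exact R1|exact R2]]. lia.
Qed.
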